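(* For $(n,m) \in \mathbb{Z}^2$ let $q_{(n,m)}(x) = x^4 + n x^3 + m x^2 + n x + 1$, and let $Q = \{(n,m) \in \mathbb{Z}^2 : q_{(n,m)} \text{ has no real root}\}$. Then there exists a finite set $\tilde{Q} \subseteq \mathbb{Z}^2$ such that for every $(n,m) \in Q \setminus \tilde{Q}$ one has $n^2 - 4m + 8 \le 0$. *)

(* Defs.v *)
From Stdlib Require Import Reals ZArith List.
Open Scope R_scope.

Definition q (n m : Z) (x : R) : R :=
  x ^ 4 + IZR n * x ^ 3 + IZR m * x ^ 2 + IZR n * x + 1.

Definition in_Q (n m : Z) : Prop := forall x : R, q n m x <> 0.

(* Main.v *)
Require Import Defs.
From Stdlib Require Import Reals ZArith List.
From Stdlib Require Import Lra Lia Psatz.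
Import ListNotations.

Lemma root_of_y (n m : Z) (y : R) :
  4 <= y * y -> y * y + IZR n * y + IZR m - 2 = 0 -> ~ in_Q n m.
Proof.
  intros Hy Hp HQ.
  set (t := sqrt (y * y - 4)).
  assert (Ht : t * t = y * y - 4) by (apply sqrt_sqrt; lra).
  set (x := (y + t) / 2).
  apply (HQ x). unfold q.
  assert (Hx : x * x - y * x + 1 = 0) by (unfold x; nra).
  replace (x ^ 4 + IZR n * x ^ 3 + IZR m * x ^ 2 + IZR n * x + 1) with
    ((x * x - y * x + 1) * (x * x + (IZR n + y) * x + 1) +
     (y * y + IZR n * y + IZR m - 2) * (x * x)) by ring.
  rewrite Hx, Hp. ring.
Qed.

Lemma bounds (n m : Z) : in_Q n m -> (n ^ 2 - 4 * m + 8 > 0)%Z ->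
  (-3 <= n <= 3 /\ -1 <= m <= 5)%Z.
Proof.
  intros HQ HD.
  assert (HDr : 0 < IZR n * IZR n - 4 * IZR m + 8).
  { assert (HD' : (0 < n * n - 4 * m + 8)%Z) by lia.
    apply IZR_lt in HD'. rewrite plus_IZR, minus_IZR, !mult_IZR in HD'. lra. }
  set (s := sqrt (IZR n * IZR n - 4 * IZR m + 8)).
  assert (Hs : s * s = IZR n * IZR n - 4 * IZR m + 8) by (apply sqrt_sqrt; lra).
  assert (Hs0 : 0 <= s) by apply sqrt_pos.
  set (y1 := (- IZR n + s) / 2). set (y2 := (- IZR n - s) / 2).
  assert (H1 : y1 * y1 < 4).
  { destruct (Rlt_or_le (y1 * y1) 4) as [h|h]; auto.
    exfalso; apply (root_of_y n m y1 h); [|exact HQ]; unfold y1.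
    replace ((- IZR n + s) / 2 * ((- IZR n + s) / 2) + IZR n * ((- IZR n + s) / 2) + IZR m - 2)
      with ((s * s - IZR n * IZR n + 4 * IZR m - 8) / 4) by field.
    rewrite Hs. field. }
  assert (H2 : y2 * y2 < 4).
  { destruct (Rlt_or_le (y2 * y2) 4) as [h|h]; auto.
    exfalso; apply (root_of_y n m y2 h); [|exact HQ]; unfold y2.
    replace ((- IZR n - s) / 2 * ((- IZR n - s) / 2) + IZR n * ((- IZR n - s) / 2) + IZR m - 2)
      with ((s * s - IZR n * IZR n + 4 * IZR m - 8) / 4) by field.
    rewrite Hs. field. }
  assert (Hn : IZR n = - (y1 + y2)) by (unfold y1, y2; field).
  assert (Hm : IZR m = y1 * y2 + 2).
  { unfold y1, y2. replace ((- IZR n + s) / 2 * ((- IZR n - s) / 2)) with ((IZR n * IZR n - s * s) / 4) by field.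
    rewrite Hs. field. }
  assert (a1 : -2 < y1 < 2) by nra.
  assert (a2 : -2 < y2 < 2) by nra.
  assert (b1 : -4 < IZR n < 4) by lra.
  assert (b2 : -4 < IZR m - 2 < 4) by nra.
  destruct b1 as [c1 c2]. destruct b2 as [c3 c4].
  apply lt_IZR in c1. apply lt_IZR in c2.
  assert (c3' : IZR (-2) < IZR m) by lra.
  assert (c4' : IZR m < IZR 6) by lra.
  apply lt_IZR in c3'. apply lt_IZR in c4'. lia.
Qed.

Theorem lemmaA1 :
  exists Qt : list (Z * Z),
    forall n m : Z, in_Q n m -> ~ In (n, m) Qt ->
      (n ^ 2 - 4 * m + 8 <= 0)%Z.
Proof.
  exists (list_prod [(-3)%Z; (-2)%Z; (-1)%Z; 0%Z; 1%Z; 2%Z; 3%Z]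
                    [(-1)%Z; 0%Z; 1%Z; 2%Z; 3%Z; 4%Z; 5%Z]).
  intros n m HQ HIn.
  destruct (Z_le_gt_dec (n ^ 2 - 4 * m + 8) 0) as [h|h]; auto.
  exfalso. destruct (bounds n m HQ h) as [[a b] [c d]].
  apply HIn. apply in_prod.
  - assert (n = -3 \/ n = -2 \/ n = -1 \/ n = 0 \/ n = 1 \/ n = 2 \/ n = 3)%Z by lia.
    repeat (destruct H as [H|H]; [subst; simpl; tauto|]); subst; simpl; tauto.
  - assert (m = -1 \/ m = 0 \/ m = 1 \/ m = 2 \/ m = 3 \/ m = 4 \/ m = 5)%Z by lia.
    repeat (destruct H as [H|H]; [subst; simpl; tauto|]); subst; simpl; tauto.
Qed.
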